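(* Let $G=K^{n_{1},n_{2},\ldots,n_{k}}_{n}$ where $k\geq 2$, $n_i\ge1$ and $n=\sum_{i=1}^{k}n_{i}+1$. Then the distance characteristic polynomial of $G$ is $$P_{D}(\lambda)=\det(\lambda I-D(G))=(\lambda+1)^{n-k-1}\Big(\lambda-\sum_{i=1}^{k}\frac{n_{i}(2\lambda+1)}{\lambda+n_{i}+1}\Big)\prod_{i=1}^{k}(\lambda+n_{i}+1).$$
   Context: $D(G)$ is the distance matrix of $G$. $K^{n_{1},\ldots,n_{k}}_{n}$ denotes the graph on $n$ vertices having a vertex $v$ of degree $n-1$ such that $G-v$ is the disjoint union of complete graphs $K_{n_1},\dots,K_{n_k}$. *)

(* Defs.v *)
From HB Require Import structures.
From mathcomp Require Import all_boot all_order all_algebra.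
Set Implicit Arguments. Unset Strict Implicit. Unset Printing Implicit Defensive.
Import Order.TTheory GRing.Theory Num.Theory.

Fixpoint within (T : finType) (e : rel T) (m : nat) (x y : T) : bool :=
  match m with
  | 0 => x == y
  | m'.+1 => within e m' x y || [exists z, within e m' x z && e z y]
  end.

(* Graph distance: least m such that y is reachable from x in at most m
   steps (for connected graphs this is the usual shortest-path distance;
   every shortest walk has length < #|T|). *)
Definition gdist (T : finType) (e : rel T) (x y : T) : nat :=
  find (fun m => within e m x y) (iota 0 #|T|).

Definition distmx (R : nzRingType) (n : nat) (e : rel 'I_n) : 'M[R]_n :=
  \matrix_(i, j) ((gdist e i j)%:R)%R.

(* G is (isomorphic to) K_n^{n_1,...,n_k}: a simple graph on n vertices
   having a vertex v of degree n-1 such that G - v is the disjoint union of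
   complete graphs K_{n_1}, ..., K_{n_k}; the component of a vertex x != v
   is c x, and component i has exactly n_i vertices. *)
Definition is_K_graph (n k : nat) (ns : 'I_k -> nat) (e : rel 'I_n) : Prop :=
  [/\ symmetric e, irreflexive e &
   exists (v : 'I_n) (c : 'I_n -> 'I_k),
     [/\ #|[set y | e v y]| = n.-1,
         forall i : 'I_k, #|[set x | (x != v) && (c x == i)]| = ns i &
         forall x y : 'I_n, x != v -> y != v -> x != y ->
           e x y = (c x == c y)]].

(* Main.v *)
Require Import Defs.
From HB Require Import structures.
From mathcomp Require Import all_boot all_order all_algebra.
From mathcomp Require Import ring.
Import Order.TTheory GRing.Theory Num.Theory.
Local Open Scope ring_scope.

Lemma sylv (R : comNzRingType) (p q : nat) (A : 'M[R]_(p,q)) (B : 'M[R]_(q,p)) (a : R) :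
  a ^+ q * \det (a%:M - A *m B) = a ^+ p * \det (a%:M - B *m A).
Proof.
pose X := block_mx (a%:M) A B (1%:M : 'M[R]_q).
have h1 : X *m block_mx 1%:M 0 (-B) 1%:M = block_mx (a%:M - A *m B) A 0 1%:M.
  by rewrite mulmx_block !mulmx1 !mulmx0 mul1mx mulmxN !add0r subrr.
have h2 : block_mx 1%:M 0 (-B) (a%:M) *m X = block_mx (a%:M) A 0 (a%:M - B *m A).
  rewrite mulmx_block !mul1mx !mul0mx !addr0 mulmx1 mulNmx mul_mx_scalar mul_scalar_mx.
  by rewrite addNr addrC mulNmx.
have d1 := congr1 determinant h1.
have d2 := congr1 determinant h2.
rewrite det_mulmx det_lblock det_ublock !det1 !mulr1 in d1.
rewrite det_mulmx det_lblock det_ublock det1 mul1r det_scalar in d2.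
by rewrite -d1 d2 det_scalar.
Qed.
Lemma det2 (R : comNzRingType) (M : 'M[R]_2) : \det M = M 0 0 * M 1 1 - M 0 1 * M 1 0.
Proof.
rewrite (expand_det_row _ 0) !big_ord_recl big_ord0 addr0 /cofactor !det_mx11 !mxE /=.
have -> : lift (0 : 'I_2) 0 = 1 by apply/val_inj.
have -> : lift (1 : 'I_2) 0 = 0 by apply/val_inj.
rewrite /bump /= expr0 expr1 !mul1r mulN1r mulrN.
by [].
Qed.
Definition Cc (R : nzRingType) (k : nat) (s t : 'I_k.+1) : R :=
  if [|| s == t, s == ord0 | t == ord0] then 1 else 2.
Arguments Cc R {k}.

Lemma GmulE (R : nzRingType) (n k p : nat) (cl : 'I_n -> 'I_k.+1) (M : 'M[R]_(k.+1, p)) :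
  (\matrix_(x, s) ((cl x == s)%:R : R)) *m M = \matrix_(x, t) M (cl x) t.
Proof.
apply/matrixP => x t; rewrite !mxE (bigD1 (cl x)) //= big1 => [|s hs].
  by rewrite !mxE eqxx mul1r addr0.
by rewrite !mxE eq_sym (negbTE hs) mul0r.
Qed.

Lemma mulGtE (R : nzRingType) (n k p : nat) (cl : 'I_n -> 'I_k.+1) (M : 'M[R]_(p, k.+1)) :
  M *m (\matrix_(x, s) ((cl x == s)%:R : R))^T = \matrix_(t, x) M t (cl x).
Proof.
apply/matrixP => t x; rewrite !mxE (bigD1 (cl x)) //= big1 => [|s hs].
  by rewrite !mxE eqxx mulr1 addr0.
by rewrite !mxE eq_sym (negbTE hs) mulr0.
Qed.

Lemma GtG (R : nzRingType) (n k : nat) (cl : 'I_n -> 'I_k.+1) (sz : 'I_k.+1 -> nat) :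
  (forall s, #|[set x | cl x == s]| = sz s) ->
  (\matrix_(x, s) ((cl x == s)%:R : R))^T *m (\matrix_(x, s) ((cl x == s)%:R : R))
   = diag_mx (\row_s (sz s)%:R).
Proof.
move=> hsz; apply/matrixP => s t; rewrite !mxE.
rewrite (eq_bigr (fun j => if cl j == s then (s == t)%:R else 0)); last first.
  move=> j _; rewrite !mxE.
  by case: (eqVneq (cl j) s) => [<-|_]; rewrite ?mul1r ?mul0r.
rewrite -big_mkcond sumr_const /=.
have -> : #|[pred j | cl j == s]| = sz s by rewrite -hsz; apply: eq_card => j; rewrite inE.
by case: (s == t); rewrite ?mulr1n ?mulr0n // mul0rn.
Qed.

Lemma AL (R : numFieldType) (n k : nat) (cl : 'I_n -> 'I_k.+1) (sz : 'I_k.+1 -> nat) (a : R) :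
  (forall s, #|[set x | cl x == s]| = sz s) -> (k.+1 <= n)%N -> a != 0 ->
  (forall s, a + (sz s)%:R != 0) ->
  \det (a%:M - \matrix_(x, y) (Cc R (cl x) (cl y))) =
  a ^+ (n - k.+1) * \prod_s (a + (sz s)%:R) *
  ((1 - 2 * ((sz ord0)%:R / (a + (sz ord0)%:R))) *
   (1 - 2 * \sum_(i < k) ((sz (lift ord0 i))%:R / (a + (sz (lift ord0 i))%:R))) -
   ((sz ord0)%:R / (a + (sz ord0)%:R)) *
   \sum_(i < k) ((sz (lift ord0 i))%:R / (a + (sz (lift ord0 i))%:R))).
Proof.
move=> hsz hn a0 hs.
set G := \matrix_(x, s) ((cl x == s)%:R : R).
pose Cm : 'M[R]_k.+1 := \matrix_(s, t) (Cc R s t).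
have eA : \matrix_(x, y) (Cc R (cl x) (cl y)) = G *m (Cm *m G^T).
  rewrite mulGtE GmulE; apply/matrixP => x y; rewrite !mxE //.
have hsy := sylv _ _ _ G (Cm *m G^T) a.
rewrite -mulmxA (GtG _ _ _ cl sz) // in hsy.
set X := \det (a%:M - Cm *m diag_mx (\row_s (sz s)%:R)) in hsy.
have -> : \det (a%:M - \matrix_(x, y) Cc R (cl x) (cl y)) = a ^+ (n - k.+1) * X.
  apply: (mulfI (expf_neq0 k.+1 a0)); rewrite eA hsy -{1}(subnK hn) exprD.
  by rewrite mulrCA mulrA.
rewrite -mulrA; congr (_ * _); rewrite /X.
pose Dl := diag_mx (\row_s (a + (sz s)%:R)).
pose Di := diag_mx (\row_s (a + (sz s)%:R)^-1).
pose Y : 'M[R]_(k.+1, 2) := \matrix_(s, u) (((s == ord0) == (u == ord0))%:R).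
pose HS : 'M[R]_(2, k.+1) := \matrix_(u, t) ((if (t == ord0) == (u == ord0) then 2 else 1) * (sz t)%:R).
have DDi : Dl *m Di = 1%:M.
  apply/matrixP => s t; rewrite mulmx_diag !mxE divff //.
have eC : a%:M - Cm *m diag_mx (\row_s (sz s)%:R) = Dl *m (1%:M - (Di *m Y) *m HS).
  rewrite mulmxBr mulmx1 !mulmxA DDi mul1mx.
  apply/matrixP => s t; rewrite mul_mx_diag !mxE big_ord_recl big_ord1 !mxE.
  have l0 : (lift ord0 (ord0 : 'I_1) == ord0 :> 'I_2) = false by [].
  rewrite eqxx l0 /Cc.
  case st: (s == t).
    move/eqP: st => st; subst t; rewrite /=.
    by case: (s == ord0) => /=; rewrite ?mulr1n ?mulr0n; ring.
  rewrite /=.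
  case s0: (s == ord0); case t0: (t == ord0) => /=; rewrite ?mulr1n ?mulr0n; try ring.
  by move: st; rewrite (eqP s0) (eqP t0) eqxx.
rewrite eC det_mulmx det_diag; congr (_ * _); first by apply: eq_bigr => s _; rewrite mxE.
have h1 := sylv _ _ _ (Di *m Y) HS 1; rewrite !expr1n !mul1r in h1.
rewrite h1 det2.
set al := (sz ord0)%:R / (a + (sz ord0)%:R).
set be := \sum_(i < k) (sz (lift ord0 i))%:R / (a + (sz (lift ord0 i))%:R).
have l0 : (lift ord0 (ord0 : 'I_1) == ord0 :> 'I_2) = false by [].
have Pe : forall u w : 'I_2, (HS *m (Di *m Y)) u w =
   (if (u == ord0) then 2 else 1) * al * (w == ord0)%:R
 + (if (u == ord0) then 1 else 2) * be * (w != ord0)%:R.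
  have nl : forall i : 'I_k, (lift ord0 i == ord0) = false.
    by move=> i; rewrite eq_sym (negbTE (neq_lift _ _)).
  have sb : forall c d : R, \sum_(i < k) c * (sz (lift ord0 i))%:R *
       ((a + (sz (lift ord0 i))%:R)^-1 * d) = c * d * be.
    by move=> c d; rewrite /be mulr_sumr; apply: eq_bigr => i _; ring.
  move=> u w; rewrite mul_diag_mx !mxE big_ord_recl !mxE eqxx.
  under eq_bigr => i _ do rewrite !mxE nl.
  rewrite sb /al; case: (u == ord0); case: (w == ord0) => /=; ring.
have E : forall u w : 'I_2, (1%:M - HS *m (Di *m Y)) u w = (u == w)%:R - (HS *m (Di *m Y)) u w.
  by move=> u w; rewrite [LHS]mxE [X in X + _ = _]mxE [X in _ + X = _]mxE.
rewrite !E !Pe /=; ring.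
Qed.
Lemma ev_all (n : nat) (e : rel 'I_n) (v : 'I_n) :
  irreflexive e -> #|[set y | e v y]| = n.-1 -> forall y, y != v -> e v y.
Proof.
move=> irr hdeg y yv.
have sub : [set y | e v y] \subset [set~ v].
  apply/subsetP=> z; rewrite !inE => hz; apply/eqP=> zv; move: hz; rewrite zv irr.
  by [].
have : [set y | e v y] == [set~ v] by rewrite eqEcard sub cardsC1 hdeg card_ord leqnn.
by move/eqP/setP/(_ y); rewrite !inE yv.
Qed.

Lemma distE (n k : nat) (e : rel 'I_n) (v : 'I_n) (c : 'I_n -> 'I_k) :
  symmetric e -> irreflexive e -> #|[set y | e v y]| = n.-1 ->
  (forall x y, x != v -> y != v -> x != y -> e x y = (c x == c y)) ->
  (3 <= n)%N -> forall x y, gdist e x y =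
    (if x == y then 0 else if [|| x == v, y == v | c x == c y] then 1 else 2)%N.
Proof.
move=> sym irr hdeg hedge n3 x y.
have ev := @ev_all n e v irr hdeg.
have w1 : within e 1 x y = (x == y) || e x y.
  rewrite /= ; congr (_ || _); apply/existsP/idP => [[z /andP[/eqP <- //]]|h].
  by exists x; rewrite eqxx.
have eq3 : iota 0 n = [:: 0; 1; 2] ++ iota 3 (n - 3) by rewrite -[in RHS](iotaD 0 3) subnKC.
rewrite /gdist card_ord eq3 /=.
case xy0: (x == y) => //=. have xy : x != y by rewrite xy0.
have exy : e x y = [|| x == v, y == v | c x == c y].
  case xv: (x == v) => /=.
    by move/eqP: xv => xv; subst x; rewrite ev // eq_sym.
  case yv: (y == v) => /=.
    by move/eqP: yv => yv; subst y; rewrite sym ev // xv.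
  by rewrite hedge ?xv ?yv.
have -> : [exists z, (x == z) && e z y] = e x y.
  apply/existsP/idP => [[z /andP[/eqP <- //]]|h].
  by exists x; rewrite eqxx.
rewrite -exy; case exy': (e x y) => //=.
move: exy; rewrite exy' => /esym /norP [xv /norP [yv _]].
have -> // : [exists z, ((x == z) || [exists z0, (x == z0) && e z0 z]) && e z y].
apply/existsP; exists v; rewrite ev // andbT; apply/orP; right.
by apply/existsP; exists x; rewrite eqxx sym ev.
Qed.
Lemma polyeq (R : numFieldType) (p q : {poly R}) :
  (forall m : nat, p.[m%:R] = q.[m%:R]) -> p = q.
Proof.
move=> h; apply/eqP; rewrite -subr_eq0; apply/negPn/negP => nz.
have := max_poly_roots nz (rs := [seq (m%:R : R) | m <- iota 0 (size (p - q))]).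
rewrite size_map size_iota ltnn => H; suff : false by []; apply: H.
  by apply/allP => x /mapP [m _ ->]; rewrite /root hornerD hornerN h subrr.
rewrite map_inj_uniq ?iota_uniq // => x y /eqP; rewrite eqr_nat => /eqP.
by [].
Qed.

Lemma char_poly_eval (R : comNzRingType) n (A : 'M[R]_n) (x : R) :
  (char_poly A).[x] = \det (x%:M - A).
Proof.
rewrite /char_poly -horner_evalE -det_map_mx; congr (\det _).
apply/matrixP => i j; rewrite !mxE /horner_eval.
change ((('X *+ (i == j) - (A i j)%:P).[x]) = x *+ (i == j) - A i j).
by rewrite hornerD hornerN hornerMn hornerX hornerC.
Qed.

Theorem lemma3p4 (R : numFieldType) (n k : nat) (ns : 'I_k -> nat)
    (e : rel 'I_n) (lam : R) :
  (2 <= k)%N ->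
  (forall i, (0 < ns i)%N) ->
  n = ((\sum_(i < k) ns i).+1)%N ->
  is_K_graph ns e ->
  (forall i, lam + (ns i)%:R + 1 != 0) ->
  (char_poly (distmx R e)).[lam] =
    (lam + 1) ^+ (n - k - 1)
    * (lam - \sum_(i < k) ((ns i)%:R * (2 * lam + 1) / (lam + (ns i)%:R + 1)))
    * \prod_(i < k) (lam + (ns i)%:R + 1).
Proof.
move=> hk hpos hn [sym irr [v [c [hdeg hcard hedge]]]] hd.
have hsum : (k <= \sum_(i < k) ns i)%N.
  have : (\sum_(i < k) 1 <= \sum_(i < k) ns i)%N by apply: leq_sum => i _; exact: hpos.
  by rewrite sum1_card card_ord.
have n3 : (3 <= n)%N by rewrite hn ltnS (leq_trans hk hsum).
have nk : (k.+1 <= n)%N by rewrite hn ltnS.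
pose cl x : 'I_k.+1 := if x == v then ord0 else lift ord0 (c x).
pose sz (s : 'I_k.+1) := if unlift ord0 s is Some i then ns i else 1%N.
have szl : forall i, sz (lift ord0 i) = ns i by move=> i; rewrite /sz liftK.
have sz0 : sz ord0 = 1%N by rewrite /sz unlift_none.
have clv : forall x, (cl x == ord0) = (x == v).
  move=> x; rewrite /cl; case: (x == v); first by rewrite eqxx.
  by rewrite eq_sym (negbTE (neq_lift _ _)).
have hsz : forall s, #|[set x | cl x == s]| = sz s.
  move=> s; case: (unliftP ord0 s) => [i ->|->].
    rewrite szl -hcard; apply: eq_card => x; rewrite !inE /cl.
    case: (x == v) => /=; first by rewrite (negbTE (neq_lift _ _)).
    by rewrite (inj_eq lift_inj).
  rewrite sz0 -(cards1 v); apply: eq_card => x; rewrite !inE clv.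
  by [].
have eD : distmx R e = \matrix_(x, y) Cc R (cl x) (cl y) - 1%:M.
  apply/matrixP => x y; rewrite !mxE (distE _ _ _ _ _ sym irr hdeg hedge n3 x y) /Cc.
  case xy: (x == y).
    move/eqP: xy => xy; subst y; rewrite eqxx /=; ring.
  rewrite !clv /= subr0.
  case xv: (x == v); case yv: (y == v) => //=; rewrite ?orbT //.
  have li : forall a b : 'I_k, (lift (ord0 : 'I_k.+1) a == lift ord0 b) = (a == b).
    by move=> a b; apply/eqP/eqP => [/lift_inj|->].
  by rewrite /cl xv yv li orbF; case: (c x == c y).
pose F (l : R) := (l + 1) ^+ (n - k - 1)
    * (l - \sum_(i < k) ((ns i)%:R * (2 * l + 1) / (l + (ns i)%:R + 1)))
    * \prod_(i < k) (l + (ns i)%:R + 1).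
have key : forall l : R, l + 1 != 0 -> l + 2 != 0 -> (forall i, l + (ns i)%:R + 1 != 0) ->
    (char_poly (distmx R e)).[l] = F l.
  move=> l h1 h2 h3; rewrite char_poly_eval.
  have -> : l%:M - distmx R e = (l + 1)%:M - \matrix_(x, y) Cc R (cl x) (cl y).
    by rewrite eD; apply/matrixP => x y; rewrite !mxE; case: (x == y) => /=; ring.
  rewrite (AL _ _ _ cl sz) //; last first.
    move=> s; case: (unliftP ord0 s) => [i ->|->]; first by rewrite szl addrAC.
    by rewrite sz0 -addrA (_ : 1 + 1 = 2).
  rewrite big_ord_recl sz0.
  have bE : \sum_(i < k) (sz (lift ord0 i))%:R / (l + 1 + (sz (lift ord0 i))%:R)
      = \sum_(i < k) (ns i)%:R / (l + (ns i)%:R + 1).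
    by apply: eq_bigr => i _; rewrite szl addrAC.
  have pE : \prod_(i < k) (l + 1 + (sz (lift ord0 i))%:R)
      = \prod_(i < k) (l + (ns i)%:R + 1).
    by apply: eq_bigr => i _; rewrite szl addrAC.
  rewrite bE pE /F.
  have sE : \sum_(i < k) ((ns i)%:R * (2 * l + 1) / (l + (ns i)%:R + 1))
      = (2 * l + 1) * \sum_(i < k) (ns i)%:R / (l + (ns i)%:R + 1).
    by rewrite mulr_sumr; apply: eq_bigr => i _; ring.
  rewrite sE (_ : (n - k.+1 = n - k - 1)%N); last by rewrite subnS subn1.
  set be := \sum_(i < k) _.
  set P := \prod_(i < k) _.
  have h2' : l + 1 + 1 != 0 by rewrite -addrA.
  by field.
pose Q : {poly R} := ('X + 1) ^+ (n - k - 1) *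
  ('X * \prod_(i < k) ('X + ((ns i)%:R + 1)%:P) -
   \sum_(i < k) ((ns i)%:R%:P * (2%:P * 'X + 1)) *
      \prod_(j < k | j != i) ('X + ((ns j)%:R + 1)%:P)).
have Qeval : forall l : R, (forall i, l + (ns i)%:R + 1 != 0) -> Q.[l] = F l.
  move=> l h3; rewrite /Q /F hornerM horner_exp hornerD hornerX hornerC hornerD hornerM hornerN.
  have pe : forall P : pred 'I_k, (\prod_(i < k | P i) ('X + ((ns i)%:R + 1)%:P)).[l]
      = \prod_(i < k | P i) (l + (ns i)%:R + 1).
    by move=> P; rewrite horner_prod; apply: eq_bigr => i _; rewrite hornerD hornerX hornerC addrA.
  rewrite pe horner_sum -mulrA; congr (_ * _).
  rewrite mulrBl mulr_suml; congr (_ - _).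
  rewrite ?hornerX //. apply: eq_bigr => i _; rewrite hornerM pe hornerM hornerC hornerD hornerM hornerX !hornerC.
  rewrite [in RHS](bigD1 i) //= mulrA divfK //; ring.
have cQ : char_poly (distmx R e) = Q.
  apply: polyeq => m.
  have hm : forall i, (m%:R : R) + (ns i)%:R + 1 != 0.
    by move=> i; rewrite -natrD natr1 pnatr_eq0.
  rewrite key ?Qeval //; first by rewrite natr1 pnatr_eq0.
  by rewrite -natrD pnatr_eq0 addn2.
by rewrite cQ Qeval.
Qed.
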